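(* Let $\alpha>0$ and let $P=\{x\in\mathbb R^d\mid \langle a_i,x\rangle\le b_i,\ 1\le i\le n\}$ be a $d$-dimensional lattice polytope, given by an irredundant system with primitive $a_i\in(\mathbb Z^d)^*$, whose normal fan is $\alpha$-canonical. Let $a_1,\dots,a_m$ be its core normals and $A_{\mathrm{core}}=\operatorname{conv}(a_1,\dots,a_m)$. Then \[ \operatorname{relint}(\alpha A_{\mathrm{core}})\cap(\mathbb Z^d)^*=\{0\}. \]
   Context: For rational $c>0$ the adjoint polytope is $P^{(c)}=\{x\mid \langle a_i,x\rangle\le b_i-c,\ 1\le i\le n\}$. The $\mathbb Q$-codegree is defined by $\operatorname{qcd}(P)^{-1}=\max\{c>0\mid P^{(c)}\neq\emptyset\}$. Put $c_0=\operatorname{qcd}(P)^{-1}$ and $\operatorname{core}P=P^{(c_0)}$. A normal $a_i$ is a core normal if $\langle a_i,y\rangle=b_i-c_0$ for all $y\in\operatorname{core}P$. The relative interior $\operatorname{relint}$ is taken with respect to the affine hull. The normal fan $\Sigma_P$ is the complete fan whose cones are $\operatorname{cone}(a_i\mid i\in I)$ with $I$ the set of facets containing a given face of $P$. For a rational polyhedral cone $\sigma$ with primitive ray generators $a_1,\dots,a_k$, the height of $y\in\sigma$ is $\max\{\sum\lambda_i\mid y=\sum\lambda_i a_i,\ \lambda_i\ge0\}$; $\sigma$ is $\alpha$-canonical if every nonzero $y\in\sigma\cap(\mathbb Z^d)^*$ has height at least $\alpha$, and a fan is $\alpha$-canonical if all its cones are. *)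

(* Defs.v *)
From HB Require Import structures.
From mathcomp Require Import all_boot all_order all_algebra.
Set Implicit Arguments. Unset Strict Implicit. Unset Printing Implicit Defensive.
Import Order.TTheory GRing.Theory Num.Theory.
Local Open Scope ring_scope.

Definition dotv (R : nzRingType) (d : nat) (u x : 'rV[R]_d) : R :=
  \sum_(j < d) u 0 j * x 0 j.

Definition intv (R : nzRingType) (d : nat) (z : 'rV[int]_d) : 'rV[R]_d :=
  map_mx (fun k : int => k%:~R) z.

Definition is_lattice (R : nzRingType) (d : nat) (y : 'rV[R]_d) : Prop :=
  exists z : 'rV[int]_d, y = intv R z.

Definition primitive (d : nat) (z : 'rV[int]_d) : Prop :=
  \big[gcdz/0]_(j < d) z 0 j = 1.

Definition polyh (R : realFieldType) (d n : nat)
  (a : 'I_n -> 'rV[int]_d) (b : 'I_n -> R) (x : 'rV[R]_d) : Prop :=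
  forall i, dotv (intv R (a i)) x <= b i.

Definition adjoint (R : realFieldType) (d n : nat)
  (a : 'I_n -> 'rV[int]_d) (b : 'I_n -> R) (c : R) (x : 'rV[R]_d) : Prop :=
  forall i, dotv (intv R (a i)) x <= b i - c.

Definition irredundant (R : realFieldType) (d n : nat)
  (a : 'I_n -> 'rV[int]_d) (b : 'I_n -> R) : Prop :=
  forall i, exists x : 'rV[R]_d,
    (forall j, j != i -> dotv (intv R (a j)) x <= b j) /\
    b i < dotv (intv R (a i)) x.

Definition in_conv (R : realFieldType) (d : nat) (s : seq 'rV[R]_d) (x : 'rV[R]_d) : Prop :=
  exists l : 'I_(size s) -> R,
    (forall j, 0 <= l j) /\ \sum_j l j = 1 /\ x = \sum_j l j *: s`_j.

Definition aff (R : realFieldType) (d : nat) (K : 'rV[R]_d -> Prop) (x : 'rV[R]_d) : Prop :=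
  exists s : seq 'rV[R]_d, (forall v, v \in s -> K v) /\
    exists mu : 'I_(size s) -> R, \sum_j mu j = 1 /\ x = \sum_j mu j *: s`_j.

Definition relint (R : realFieldType) (d : nat) (K : 'rV[R]_d -> Prop) (x : 'rV[R]_d) : Prop :=
  K x /\ exists eps : R, 0 < eps /\
    forall z, aff K z -> (forall j, `|z 0 j - x 0 j| < eps) -> K z.

Definition full_dim (R : realFieldType) (d : nat) (K : 'rV[R]_d -> Prop) : Prop :=
  forall x, aff K x.

Definition lattice_polytope (R : realFieldType) (d : nat) (K : 'rV[R]_d -> Prop) : Prop :=
  exists s : seq 'rV[R]_d, (forall v, v \in s -> is_lattice v) /\
    forall x, K x <-> in_conv s x.

Definition face (R : realFieldType) (d : nat) (K F : 'rV[R]_d -> Prop) : Prop :=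
  (exists x, F x) /\
  exists (w : 'rV[R]_d) (h : R), (forall y, K y -> dotv w y <= h) /\
    forall y, F y <-> (K y /\ dotv w y = h).

Definition in_cone (R : realFieldType) (d n : nat) (g : 'I_n -> 'rV[R]_d)
  (I : 'I_n -> Prop) (y : 'rV[R]_d) : Prop :=
  exists l : 'I_n -> R, (forall i, 0 <= l i) /\ (forall i, ~ I i -> l i = 0) /\
    y = \sum_i l i *: g i.

(* y has height >= alpha in cone(g_i | i in I), i.e. the maximum of sum l_i over
   representations y = sum l_i g_i, l_i >= 0, is at least alpha *)
Definition height_ge (R : realFieldType) (d n : nat) (g : 'I_n -> 'rV[R]_d)
  (I : 'I_n -> Prop) (y : 'rV[R]_d) (alpha : R) : Prop :=
  exists l : 'I_n -> R, (forall i, 0 <= l i) /\ (forall i, ~ I i -> l i = 0) /\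
    y = \sum_i l i *: g i /\ alpha <= \sum_i l i.

Definition alpha_canonical_cone (R : realFieldType) (d n : nat) (alpha : R)
  (g : 'I_n -> 'rV[R]_d) (I : 'I_n -> Prop) : Prop :=
  forall z : 'rV[int]_d, z != 0 -> in_cone g I (intv R z) ->
    height_ge g I (intv R z) alpha.

Definition facets_containing (R : realFieldType) (d n : nat)
  (a : 'I_n -> 'rV[int]_d) (b : 'I_n -> R) (F : 'rV[R]_d -> Prop) (i : 'I_n) : Prop :=
  forall y, F y -> dotv (intv R (a i)) y = b i.

Definition normal_fan_alpha_canonical (R : realFieldType) (d n : nat) (alpha : R)
  (a : 'I_n -> 'rV[int]_d) (b : 'I_n -> R) : Prop :=
  forall F, face (polyh a b) F ->
    alpha_canonical_cone alpha (fun i => intv R (a i)) (facets_containing a b F).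

Definition is_qcd_inv (R : realFieldType) (d n : nat)
  (a : 'I_n -> 'rV[int]_d) (b : 'I_n -> R) (c0 : R) : Prop :=
  0 < c0 /\ (exists y, adjoint a b c0 y) /\
  forall c, 0 < c -> (exists y, adjoint a b c y) -> c <= c0.

(* a_i is a core normal: <a_i, y> = b_i - c0 for all y in core P = P^(c0) *)
Definition core_normal (R : realFieldType) (d n : nat)
  (a : 'I_n -> 'rV[int]_d) (b : 'I_n -> R) (c0 : R) (i : 'I_n) : Prop :=
  forall y, adjoint a b c0 y -> dotv (intv R (a i)) y = b i - c0.

Definition scaled_Acore (R : realFieldType) (d n : nat)
  (a : 'I_n -> 'rV[int]_d) (b : 'I_n -> R) (c0 alpha : R) (x : 'rV[R]_d) : Prop :=
  exists l : 'I_n -> R, (forall i, 0 <= l i) /\ (forall i, ~ core_normal a b c0 i -> l i = 0) /\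
    \sum_i l i = 1 /\ x = alpha *: \sum_i l i *: intv R (a i).

(* Main.v *)
Require Import Defs.
From HB Require Import structures.
From mathcomp Require Import all_boot all_order all_algebra ring lra.
From Stdlib Require Import Classical IndefiniteDescription.
Set Implicit Arguments. Unset Strict Implicit. Unset Printing Implicit Defensive.
Import Order.TTheory GRing.Theory Num.Theory.
Local Open Scope ring_scope.

Lemma msq_ge0 (R : realFieldType) (x : R) : 0 <= x * x.
Proof. by rewrite -expr2 sqr_ge0. Qed.

Section Dot.
Variables (R : realFieldType) (d : nat).
Implicit Types u v x y : 'rV[R]_d.

Lemma dotvC u x : dotv u x = dotv x u.
Proof. by apply: eq_bigr => j _; rewrite mulrC. Qed.
Lemma dotvDl u v x : dotv (u + v) x = dotv u x + dotv v x.
Proof. by rewrite /dotv -big_split; apply: eq_bigr => j _; rewrite mxE mulrDl. Qed.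
Lemma dotvZl k u x : dotv (k *: u) x = k * dotv u x.
Proof. by rewrite /dotv mulr_sumr; apply: eq_bigr => j _; rewrite mxE mulrA. Qed.
Lemma dotv0l x : dotv 0 x = 0.
Proof. by rewrite /dotv big1 // => j _; rewrite mxE mul0r. Qed.
Lemma dotvNl u x : dotv (- u) x = - dotv u x.
Proof. by rewrite -scaleN1r dotvZl mulN1r. Qed.
Lemma dotvBl u v x : dotv (u - v) x = dotv u x - dotv v x.
Proof. by rewrite dotvDl dotvNl. Qed.
Lemma dotvDr u x y : dotv u (x + y) = dotv u x + dotv u y.
Proof. by rewrite dotvC dotvDl !(dotvC _ u). Qed.
Lemma dotvZr k u x : dotv u (k *: x) = k * dotv u x.
Proof. by rewrite dotvC dotvZl dotvC. Qed.
Lemma dotvBr u x y : dotv u (x - y) = dotv u x - dotv u y.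
Proof. by rewrite dotvC dotvBl !(dotvC _ u). Qed.
Lemma dotv0r x : dotv x 0 = 0.
Proof. by rewrite dotvC dotv0l. Qed.
Lemma dotv_suml (I : Type) (r : seq I) (P : pred I) (F : I -> 'rV[R]_d) x :
  dotv (\sum_(i <- r | P i) F i) x = \sum_(i <- r | P i) dotv (F i) x.
Proof.
elim/big_rec2: _ => [|i y1 y2 _ <-]; first by rewrite dotv0l.
by rewrite dotvDl.
Qed.
Lemma dotv_sumZl (I : Type) (r : seq I) (P : pred I) (c : I -> R) (F : I -> 'rV[R]_d) x :
  dotv (\sum_(i <- r | P i) c i *: F i) x = \sum_(i <- r | P i) c i * dotv (F i) x.
Proof. rewrite dotv_suml; apply: eq_bigr => i _; exact: dotvZl. Qed.
Lemma dotv_self_gt0 u : u != 0 -> 0 < dotv u u.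
Proof.
move=> nz; rewrite lt_def sumr_ge0 ?andbT; last by move=> j _; exact: msq_ge0.
apply/eqP => H; case/eqP: nz; apply/matrixP => i j; rewrite ord1 mxE.
have := @psumr_eq0P R 'I_d xpredT (fun j => u 0 j * u 0 j) (fun j _ => msq_ge0 (u 0 j)) H j isT.
by move/eqP; rewrite mulf_eq0 orbb => /eqP.
Qed.
End Dot.

Lemma min_pos (R : realFieldType) (I : finType) (P : pred I) (f : I -> R) :
  (forall i, P i -> 0 < f i) -> exists2 m, 0 < m & forall i, P i -> m <= f i.
Proof.
move=> H; exists (\big[Order.min/1]_(i | P i) f i).
  by apply: (big_ind (fun x : R => 0 < x)) => //= x y hx hy; rewrite lt_min hx hy.
move=> i Pi; rewrite (bigD1 i) //=; by rewrite ge_min lexx.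
Qed.

Lemma max_exists (R : realFieldType) (I : finType) (i0 : I) (f : I -> R) :
  exists i1, forall i, f i <= f i1.
Proof.
have [i1 Hi1] : exists i1, \big[Order.max/f i0]_i f i = f i1.
  apply: (big_ind (fun x => exists i1, x = f i1)); first by exists i0.
    move=> x y [i ->] [j ->]; case: (leP (f i) (f j)) => _; [by exists j | by exists i].
  by move=> i _; exists i.
exists i1 => i; rewrite -Hi1 (bigD1 i) //= le_max lexx //.
Qed.

Lemma fchoice (I T : Type) (Q : I -> T -> Prop) :
  (forall i, exists y, Q i y) -> exists f : I -> T, forall i, Q i (f i).
Proof.
move=> H; exists (fun i => proj1_sig (constructive_indefinite_description _ (H i))).
by move=> i; case: (constructive_indefinite_description _ _).
Qed.

Lemma termwise (R : realFieldType) (I : finType) (y s : I -> R) :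
  (forall k, 0 <= y k) -> (forall k, 0 <= s k) -> \sum_k y k * s k = 0 ->
  forall i, y i != 0 -> s i = 0.
Proof.
move=> hy hs H i nz.
have := @psumr_eq0P R I xpredT (fun k => y k * s k) (fun k _ => mulr_ge0 (hy k) (hs k)) H i isT.
by move/eqP; rewrite mulf_eq0 (negbTE nz) /= => /eqP.
Qed.

Lemma sumD1 (V : nmodType) (I : finType) (P : {set I}) j (F : I -> V) :
  j \in P -> \sum_(i in P) F i = F j + \sum_(i in P :\ j) F i.
Proof.
move=> Pj; rewrite (bigD1 j) //=; congr (_ + _); apply: eq_bigl => i.
by rewrite !inE andbC.
Qed.

Lemma farkas (R : realFieldType) (d : nat) (I : finType) :
  forall k (g : I -> 'rV[R]_d) (P : {set I}) (c : 'rV[R]_d), #|P| = k ->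
  (exists l : I -> R, (forall i, 0 <= l i) /\ c = \sum_(i in P) l i *: g i) \/
  (exists h, (forall i, i \in P -> dotv (g i) h <= 0) /\ 0 < dotv c h).
Proof.
elim=> [|k IH] g P c hP.
  have P0 : P = set0 by apply/eqP; rewrite -cards_eq0 hP.
  case: (eqVneq c 0) => [->|nz].
    by left; exists (fun _ => 0); split => //; rewrite P0 big_set0.
  by right; exists c; split; [move=> i; rewrite P0 inE | exact: dotv_self_gt0].
have [j Pj] : exists j, j \in P by apply/set0Pn; rewrite -card_gt0 hP.
have hP' : #|P :\ j| = k by move: hP; rewrite (cardsD1 j P) Pj add1n => -[].
case: (IH g (P :\ j) c hP') => [[l [l0 ->]] | [h [hg hc]]].
  left; exists (fun i => if i == j then 0 else l i); split.
    by move=> i; case: ifP.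
  rewrite (sumD1 _ Pj) eqxx scale0r add0r; apply: eq_bigr => i.
  by rewrite !inE => /andP[/negbTE -> _].
case: (lerP (dotv (g j) h) 0) => gjh.
  right; exists h; split => // i Pi; case: (eqVneq i j) => [->//|nij].
  by apply: hg; rewrite !inE nij.
set r := dotv (g j) h.
have rnz : r != 0 by rewrite gt_eqF.
pose g' i := g i - (dotv (g i) h / r) *: g j.
pose c' := c - (dotv c h / r) *: g j.
case: (IH g' (P :\ j) c' hP') => [[mu [mu0 Hc']] | [h' [hg' hc']]].
  left.
  pose kap := dotv c h / r - \sum_(i in P :\ j) mu i * (dotv (g i) h / r).
  exists (fun i => if i == j then kap else mu i); split.
    move=> i0; case: ifP => _ //; rewrite /kap subr_ge0.
    apply: (@le_trans _ _ 0).
      apply: sumr_le0 => i; rewrite !inE => /andP[nij Pi'].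
      apply: mulr_ge0_le0 => //; rewrite ler_pdivrMr // mul0r.
      by apply: hg; rewrite !inE nij Pi'.
    by apply: divr_ge0; apply: ltW.
  rewrite (sumD1 _ Pj) eqxx.
  have -> : \sum_(i in P :\ j) (if i == j then kap else mu i) *: g i =
            \sum_(i in P :\ j) mu i *: g i.
    by apply: eq_bigr => i; rewrite !inE => /andP[/negbTE -> _].
  move: Hc'; rewrite /c' /g'.
  under eq_bigr do rewrite scalerBr scalerA.
  rewrite sumrB -scaler_suml => /eqP; rewrite subr_eq => /eqP ->.
  rewrite /kap scalerBl.
  set A := \sum_(i in P :\ j) mu i *: g i.
  set B := (\sum_(i in P :\ j) mu i * (dotv (g i) h / r)) *: g j.
  set C := (dotv c h / r) *: g j.
  by rewrite addrC addrA addrAC.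
right; exists (h' - (dotv (g j) h' / r) *: h); split.
  move=> i Pi; rewrite dotvBr dotvZr; case: (eqVneq i j) => [->|nij].
    by rewrite -/r divfK // subrr.
  have := hg' i; rewrite !inE nij Pi => /(_ isT).
  rewrite /g' dotvBl dotvZl.
  have -> : dotv (g j) h' / r * dotv (g i) h = dotv (g i) h / r * dotv (g j) h'.
    by field.
  done.
move: hc'; rewrite /c' dotvBr dotvZr dotvBl dotvZl.
have -> : dotv (g j) h' / r * dotv c h = dotv c h / r * dotv (g j) h' by field.
done.
Qed.

Lemma lfar (R : realFieldType) d n (A : 'I_n -> 'rV[R]_d) (beta : 'I_n -> R) (x0 c : 'rV[R]_d) :
  (forall i, dotv (A i) x0 <= beta i) ->
  (forall x, (forall i, dotv (A i) x <= beta i) -> dotv c x <= dotv c x0) ->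
  exists l : 'I_n -> R, (forall i, 0 <= l i) /\
    (forall i, l i != 0 -> dotv (A i) x0 = beta i) /\ c = \sum_i l i *: A i.
Proof.
move=> hx0 hopt.
pose T := [set i | dotv (A i) x0 == beta i].
case: (@farkas R d _ _ A T c erefl) => [[l [l0 E]] | [h [hT hc]]].
  exists (fun i => if i \in T then l i else 0); split; first by move=> i; case: ifP.
  split; first by move=> i; case: ifP => [|_]; [rewrite inE => /eqP | rewrite eqxx].
  by rewrite E big_mkcond /=; apply: eq_bigr => i _; case: ifP => //; rewrite scale0r.
exfalso.
have hpos : forall i, (i \notin T) && (0 < dotv (A i) h) ->
    0 < (beta i - dotv (A i) x0) / dotv (A i) h.
  move=> i /andP[nT pos]; apply: divr_gt0 => //; rewrite subr_gt0 lt_def hx0 andbT.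
  by move: nT; rewrite inE eq_sym.
have [eps eps0 epsle] := min_pos hpos.
have feas : forall i, dotv (A i) (x0 + eps *: h) <= beta i.
  move=> i; rewrite dotvDr dotvZr.
  case: (boolP (i \in T)) => iT.
    have := hT i iT; move: iT; rewrite inE => /eqP -> hi.
    by rewrite gerDl mulr_ge0_le0 // ltW.
  case: (lerP (dotv (A i) h) 0) => hi.
    by apply: le_trans (hx0 i); rewrite gerDl mulr_ge0_le0 // ltW.
  have := epsle i; rewrite iT hi => /(_ isT).
  by rewrite ler_pdivlMr // => H; rewrite addrC -lerBrDr.
have := hopt _ feas; rewrite dotvDr dotvZr => H.
have : dotv c x0 < dotv c x0 + eps * dotv c h by rewrite ltrDl mulr_gt0.
by rewrite ltNge H.
Qed.

Lemma dotv_sumr (R : realFieldType) d (I : Type) (r : seq I) (P : pred I) (F : I -> 'rV[R]_d) u :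
  dotv u (\sum_(i <- r | P i) F i) = \sum_(i <- r | P i) dotv u (F i).
Proof. rewrite dotvC dotv_suml; apply: eq_bigr => i _; exact: dotvC. Qed.

Section Core.
Variables (R : realFieldType) (d n : nat) (a : 'I_n -> 'rV[int]_d) (b : 'I_n -> R) (c0 : R).
Local Notation A i := (intv R (a i)).
Local Notation C := (core_normal a b c0).

Lemma core_cert1 x0 : adjoint a b c0 x0 -> forall j, C j ->
  exists y : 'I_n -> R, (forall i, 0 <= y i) /\ 1 <= y j /\
    (forall i, y i != 0 -> C i) /\ \sum_i y i *: A i = 0.
Proof.
move=> hx0 j Cj.
have H2 : forall x, (forall i, dotv (A i) x <= b i - c0) -> dotv (- A j) x <= dotv (- A j) x0.
  by move=> x hx; rewrite !dotvNl lerN2 (Cj x hx) (Cj x0 hx0).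
have [l [l0 [lt E]]] := @lfar R d n (fun i => A i) (fun i => b i - c0) x0 (- A j) hx0 H2.
pose y i := l i + (i == j)%:R.
have ysum : \sum_i y i *: A i = 0.
  rewrite /y; under eq_bigr do rewrite scalerDl.
  rewrite big_split /= -E (bigD1 j) //= eqxx scale1r big1 ?addr0 ?addNr //.
  by move=> i /negbTE ->; rewrite scale0r.
have ytight : forall i, y i != 0 -> dotv (A i) x0 = b i - c0.
  move=> i; rewrite /y; case: (eqVneq i j) => [-> _|nij]; first exact: Cj.
  by rewrite addr0; apply: lt.
have y0 : forall i, 0 <= y i by move=> i; rewrite addr_ge0.
exists y; split => //; split; first by rewrite /y eqxx addrC lerDl.
split => // i nz x hx.
have Z : forall z, \sum_k y k * dotv (A k) z = 0.
  by move=> z; rewrite -dotv_sumZl ysum dotv0l.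
have Hs : \sum_k y k * (b k - c0 - dotv (A k) x) = 0.
  under eq_bigr do rewrite mulrBr; rewrite sumrB Z subr0.
  rewrite -[RHS](Z x0); apply: eq_bigr => k _.
  case: (eqVneq (y k) 0) => [->|nz']; first by rewrite !mul0r.
  by rewrite ytight.
have hs : forall k, 0 <= b k - c0 - dotv (A k) x.
  by move=> k; rewrite subr_ge0; exact: hx k.
have := termwise y0 hs Hs nz.
by move/eqP; rewrite subr_eq0 => /eqP <-.
Qed.

Lemma core_exists : is_qcd_inv a b c0 -> exists j, C j.
Proof.
move=> [c0pos [[x0 hx0] cmax]].
apply: NNPP => nC.
have hX : forall i, exists x, adjoint a b c0 x /\ dotv (A i) x < b i - c0.
  move=> i; apply: NNPP => H; apply: nC; exists i => x hx; apply: NNPP => ne.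
  apply: H; exists x; split => //; rewrite lt_def (hx i) andbT.
  by apply/eqP => E; apply: ne; rewrite E.
have [X hXp] := fchoice hX.
case: (posnP n) => [n0|npos].
  have : c0 + 1 <= c0.
    apply: cmax; first by rewrite addr_gt0.
    by exists x0 => i; exfalso; have := ltn_ord i; rewrite {2}n0.
  lra.
pose xbar := (n%:R)^-1 *: \sum_i X i.
have nR : 0 < n%:R :> R by rewrite ltr0n.
have slack : forall k, 0 < b k - c0 - dotv (A k) xbar.
  move=> k; rewrite subr_gt0 /xbar dotvZr dotv_sumr ltr_pdivrMl //.
  have -> : n%:R * (b k - c0) = \sum_(i < n) (b k - c0).
    by rewrite sumr_const card_ord mulr_natl.
  rewrite (bigD1 k) //= [X in _ < X](bigD1 k) //=.
  apply: ltr_leD; first exact: (hXp k).2.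
  by apply: ler_sum => i _; exact: (hXp i).1 k.
have [m m0 mle] := @min_pos R _ predT _ (fun k _ => slack k).
have : c0 + m <= c0.
  apply: cmax; first by rewrite addr_gt0.
  exists xbar => i; have := mle i isT; lra.
lra.
Qed.

Lemma core_cert : is_qcd_inv a b c0 ->
  exists y : 'I_n -> R, (forall i, 0 <= y i) /\ (forall i, ~ C i -> y i = 0) /\
    (forall i, C i -> 0 < y i) /\ \sum_i y i = 1 /\ \sum_i y i *: A i = 0.
Proof.
move=> hq; have [j0 Cj0] := core_exists hq.
move: hq => [c0pos [[x0 hx0] cmax]].
have cert' : forall j, exists y : 'I_n -> R,
   (C j -> (forall i, 0 <= y i) /\ 1 <= y j /\ (forall i, y i != 0 -> C i) /\
      \sum_i y i *: A i = 0) /\ (~ C j -> y = (fun _ => 0)).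
  move=> j; case: (classic (C j)) => Cj.
    by have [y hy] := core_cert1 hx0 Cj; exists y; split.
  by exists (fun _ => 0); split.
have [f hf] := fchoice cert'.
pose Y i := \sum_j f j i.
have Y0 : forall i, 0 <= Y i.
  move=> i; apply: sumr_ge0 => j _; case: (classic (C j)) => Cj.
    exact: ((hf j).1 Cj).1.
  by rewrite (hf j).2.
have Ysupp : forall i, ~ C i -> Y i = 0.
  move=> i Ci; apply: big1 => j _; case: (classic (C j)) => Cj.
    apply/eqP; apply: contraT => nz; exfalso; apply: Ci.
    exact: ((hf j).1 Cj).2.2.1 i nz.
  by rewrite (hf j).2.
have Ypos : forall i, C i -> 0 < Y i.
  move=> i Ci; rewrite /Y (bigD1 i) //=.
  apply: (@lt_le_trans _ _ 1) => //.
  apply: le_trans (_ : f i i <= _); first exact: ((hf i).1 Ci).2.1.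
  rewrite lerDl sumr_ge0 // => j _; case: (classic (C j)) => Cj.
    exact: ((hf j).1 Cj).1.
  by rewrite (hf j).2.
have YA : \sum_i Y i *: A i = 0.
  under eq_bigr do rewrite /Y scaler_suml.
  rewrite exchange_big /=; apply: big1 => j _.
  case: (classic (C j)) => Cj; first exact: ((hf j).1 Cj).2.2.2.
  by rewrite (hf j).2 //; apply: big1 => i _; rewrite scale0r.
pose S := \sum_i Y i.
have S0 : 0 < S.
  rewrite /S (bigD1 j0) //=; apply: lt_le_trans (Ypos j0 Cj0) _.
  by rewrite lerDl sumr_ge0.
exists (fun i => Y i / S); split; first by move=> i; rewrite divr_ge0 // ltW.
split; first by move=> i Ci; rewrite Ysupp // mul0r.
split; first by move=> i Ci; rewrite divr_gt0 // Ypos.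
split; first by rewrite -mulr_suml divff // gt_eqF.
under eq_bigr do rewrite mulrC -scalerA.
by rewrite -scaler_sumr YA scaler0.
Qed.
End Core.

Section Main.
Variables (R : realFieldType) (d n : nat) (alpha : R) (a : 'I_n -> 'rV[int]_d) (b : 'I_n -> R) (c0 : R).
Local Notation A i := (intv R (a i)).
Local Notation C := (core_normal a b c0).
Local Notation K := (scaled_Acore a b c0 alpha).

Lemma K0 : is_qcd_inv a b c0 -> K 0.
Proof.
move=> hq; have [y [y0 [ysupp [ypos [ysum yA]]]]] := core_cert hq.
by exists y; do 3! split => //; rewrite yA scaler0.
Qed.

Lemma dir1 (z : 'rV[int]_d) : 0 < alpha -> lattice_polytope (polyh a b) ->
  normal_fan_alpha_canonical alpha a b -> is_qcd_inv a b c0 ->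
  relint K (intv R z) -> z = 0.
Proof.
move=> apos [s [_ hs]] hfan hq.
have Kzero := K0 hq.
move: hq => [c0pos [[x0 hx0] cmax]].
move=> [Kz [eps [eps0 heps]]].
apply/eqP; apply: contraT => znz; exfalso.
set Z := intv R z.
pose Sz := \sum_j `|Z 0 j|.
have Sz0 : 0 <= Sz by apply: sumr_ge0.
pose t := eps / (1 + Sz).
have t0 : 0 < t by rewrite divr_gt0 // ltr_pwDl.
pose Z' := (1 + t) *: Z.
have affZ' : aff K Z'.
  exists [:: Z; 0]; split.
    by move=> v; rewrite !inE => /orP[/eqP->|/eqP->].
  exists (fun j : 'I_2 => if val j == 0%N then 1 + t else - t).
  rewrite !big_ord_recl !big_ord0 /=; split; first by ring.
  by rewrite scaler0 !addr0.
have nearZ' : forall j, `|Z' 0 j - Z 0 j| < eps.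
  move=> j; rewrite mxE.
  have -> : (1 + t) * Z 0 j - Z 0 j = t * Z 0 j by ring.
  rewrite normrM (ger0_norm (ltW t0)).
  have -> : eps = t * (1 + Sz) by rewrite /t divfK // gt_eqF // ltr_pwDl.
  rewrite ltr_pM2l // ltr_pwDl //.
  rewrite /Sz (bigD1 j) //= lerDl sumr_ge0 //.
have [m [m0 [msupp [msum mE]]]] := heps Z' affZ' nearZ'.
have Px0 : polyh a b x0.
  by move=> i; apply: le_trans (hx0 i) _; rewrite lerBlDr lerDl ltW.
have [i0 _] : exists i0 : 'I_(size s), true.
  apply: NNPP => H.
  have [l [_ [l1 _]]] := (hs x0).1 Px0.
  have : \sum_j l j = 0 by apply: big1 => j _; exfalso; apply: H; exists j.
  by rewrite l1 => /eqP; rewrite oner_eq0.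
have [k1 hk1] := max_exists i0 (fun k => dotv Z s`_k).
set v := s`_k1.
have Pv : polyh a b v.
  apply/(hs v).2; exists (fun j => (j == k1)%:R); split; first by move=> j; rewrite ler0n.
  split; first by rewrite (bigD1 k1) //= eqxx big1 ?addr0 // => j /negbTE ->.
  by rewrite (bigD1 k1) //= eqxx scale1r big1 ?addr0 // => j /negbTE ->; rewrite scale0r.
have vmax : forall x, polyh a b x -> dotv Z x <= dotv Z v.
  move=> x /(hs x).1 [l [l0 [l1 ->]]].
  rewrite dotv_sumr; under eq_bigr do rewrite dotvZr.
  apply: (@le_trans _ _ (\sum_j l j * dotv Z v)).
    by apply: ler_sum => j _; apply: ler_wpM2l => //; exact: hk1.
  by rewrite -mulr_suml l1 mul1r.
have [lam [lam0 [lamt ZE]]] := @lfar R d n (fun i => A i) b v Z Pv vmax.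
pose F := fun y => polyh a b y /\ dotv Z y = dotv Z v.
have faceF : face (polyh a b) F.
  split; first by exists v.
  by exists Z, (dotv Z v); split => // y.
have dZ : forall x, dotv Z x = \sum_k lam k * dotv (A k) x.
  by move=> x; rewrite {1}ZE dotv_sumZl.
have incone : in_cone (fun i => A i) (facets_containing a b F) Z.
  exists lam; split => //; split => //.
  move=> i nfc; apply/eqP; apply: contraT => nz; exfalso; apply: nfc => yy [Pyy Eyy].
  have hs' : forall k, 0 <= b k - dotv (A k) yy by move=> k; rewrite subr_ge0.
  have Hs : \sum_k lam k * (b k - dotv (A k) yy) = 0.
    under eq_bigr do rewrite mulrBr; rewrite sumrB -dZ Eyy dZ.
    apply/eqP; rewrite subr_eq0; apply/eqP; apply: eq_bigr => k _.
    case: (eqVneq (lam k) 0) => [->|nz']; first by rewrite !mul0r.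
    by rewrite lamt.
  have := termwise lam0 hs' Hs nz.
  by move/eqP; rewrite subr_eq0 => /eqP <-.
have [mu [mu0 [musupp [ZE2 muge]]]] := hfan F faceF z znz incone.
have mutight : forall i, mu i != 0 -> dotv (A i) v = b i.
  move=> i nz; case: (classic (facets_containing a b F i)) => fc.
    by apply: fc; split.
  by move: nz; rewrite musupp // eqxx.
pose D := dotv Z' v - dotv Z' x0.
have Dup : D <= alpha * c0.
  rewrite /D mE !dotvZl !dotv_sumZl -mulrBr -sumrB.
  apply: ler_wpM2l; first exact: ltW.
  apply: (@le_trans _ _ (\sum_i m i * c0)); last by rewrite -mulr_suml msum mul1r.
  apply: ler_sum => i _; rewrite -mulrBr.
  case: (classic (C i)) => Ci; last by rewrite msupp // !mul0r.
  apply: ler_wpM2l => //.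
  by rewrite (Ci x0 hx0); have := Pv i; lra.
have Dlo : (1 + t) * (alpha * c0) <= D.
  rewrite /D /Z' !dotvZl -mulrBr (ZE2 : Z = _) !dotv_sumZl -sumrB.
  apply: ler_wpM2l; first by rewrite addr_ge0 // ltW.
  apply: (@le_trans _ _ (\sum_i mu i * c0)).
    by rewrite -mulr_suml mulrC [X in _ <= X]mulrC ler_wpM2l // ltW.
  apply: ler_sum => i _; rewrite -mulrBr.
  case: (eqVneq (mu i) 0) => [->|nz]; first by rewrite !mul0r.
  apply: ler_wpM2l => //.
  by rewrite (mutight i nz); have := hx0 i; lra.
have : 0 < t * (alpha * c0) by rewrite mulr_gt0 // mulr_gt0.
nra.
Qed.

Lemma dir2 : 0 < alpha -> is_qcd_inv a b c0 -> relint K (intv R 0).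
Proof.
move=> apos hq.
have [y [y0 [ysupp [ypos [ysum yA]]]]] := core_cert hq.
have intv0 : intv R (0 : 'rV[int]_d) = 0 by apply/matrixP => i j; rewrite !mxE.
rewrite intv0; split; first exact: K0.
pose M : 'M[R]_(n, d) := \matrix_(i, j) (if 0 < y i then A i 0 j else 0).
pose Q := pinvmx M.
have rowM : forall p : 'rV[R]_n,
    p *m M = \sum_i (if 0 < y i then p 0 i else 0) *: A i.
  move=> p; apply/matrixP => i0 j; rewrite (ord1 i0) !mxE summxE.
  apply: eq_bigr => i _; rewrite !mxE; case: ifP => _ //.
  by rewrite mulr0 mul0r.
pose Bq := 1 + \sum_i \sum_j `|Q j i|.
have Bq0 : 0 < Bq by rewrite ltr_pwDl // sumr_ge0 // => i _; rewrite sumr_ge0.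
have [m m0 mle] := @min_pos R _ (fun i => 0 < y i) y (fun i h => h).
pose eps := alpha * m / ((n%:R + 1) * Bq).
have nR : 0 < n%:R + 1 :> R by rewrite ltr_pwDr.
exists eps; split; first by rewrite divr_gt0 ?mulr_gt0.
move=> u affu near.
have near' : forall j, `|u 0 j| < eps by move=> j; have := near j; rewrite mxE subr0.
pose Wp x := exists w : 'I_n -> R, (forall i, ~~ (0 < y i) -> w i = 0) /\
  x = \sum_i w i *: A i.
have Wu : Wp u.
  move: affu => [s' [hs' [mu [mu1 ->]]]].
  apply: (big_ind Wp).
  - by exists (fun _ => 0); split => //; rewrite big1 // => i _; rewrite scale0r.
  - move=> x1 x2 [w1 [h1 ->]] [w2 [h2 ->]]; exists (fun i => w1 i + w2 i); split.
      by move=> i hi; rewrite h1 // h2 // addr0.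
    by rewrite -big_split; apply: eq_bigr => i _; rewrite scalerDl.
  - move=> j _; have := hs' _ (mem_nth 0 (ltn_ord j)).
    move=> [l [l0 [lsupp [_ ->]]]].
    exists (fun i => mu j * alpha * l i); split.
      move=> i hi; rewrite lsupp ?mulr0 // => Ci.
      by move: hi; rewrite ypos.
    rewrite scalerA scaler_sumr; apply: eq_bigr => i _; by rewrite scalerA.
move: Wu => [w [wsupp uE]].
have uM : u = (\row_i w i) *m M.
  rewrite rowM uE; apply: eq_bigr => i _; rewrite mxE.
  by case: ifP => // /negbT hi; rewrite wsupp.
have usub : (u <= M)%MS by rewrite uM submxMl.
pose p := u *m Q.
pose p' i := if 0 < y i then p 0 i else 0.
have uE' : u = \sum_i p' i *: A i by rewrite -rowM /p mulmxKpV.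
pose dl := eps * Bq.
have dlE : (n%:R + 1) * dl = alpha * m.
  by rewrite /dl /eps; field; rewrite ?gt_eqF.
have pb : forall i, `|p' i| <= dl.
  move=> i; rewrite /p'; case: ifP => _; last by rewrite normr0 mulr_ge0 // ltW // divr_gt0 ?mulr_gt0.
  rewrite /p mxE; apply: le_trans (ler_norm_sum _ _ _) _.
  apply: (@le_trans _ _ (\sum_j eps * `|Q j i|)).
    apply: ler_sum => j _; rewrite normrM; apply: ler_wpM2r => //.
    exact: ltW.
  rewrite -mulr_sumr /dl; apply: ler_wpM2l; first by rewrite ltW // divr_gt0 ?mulr_gt0.
  by rewrite /Bq (bigD1 i) //= addrCA lerDl addr_ge0 // sumr_ge0 // => k _; rewrite sumr_ge0.
pose S := \sum_i p' i.
have Sb : `|S| <= n%:R * dl.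
  apply: le_trans (ler_norm_sum _ _ _) _.
  apply: le_trans (ler_sum _ (fun i _ => pb i)) _.
  by rewrite sumr_const card_ord mulr_natl.
have dlE' : n%:R * dl + dl = alpha * m by rewrite -dlE mulrDl mul1r.
have anz : alpha != 0 by rewrite gt_eqF.
exists (fun i => y i + p' i / alpha - S / alpha * y i); split.
  move=> i; case: (boolP (0 < y i)) => yi.
    have y1 : y i <= 1 by rewrite -ysum (bigD1 i) //= lerDl sumr_ge0.
    have hp : - dl <= p' i by have := pb i; rewrite ler_norml => /andP[].
    have hS1 : S * y i <= `|S| * y i by apply: ler_wpM2r; [exact: ltW | exact: real_ler_norm (num_real S)].
    have hS2 : `|S| * y i <= `|S| by rewrite ler_piMr.
    have hm : alpha * m <= alpha * y i by apply: ler_wpM2l; [exact: ltW | exact: mle].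
    have -> : y i + p' i / alpha - S / alpha * y i = (alpha * y i + p' i - S * y i) / alpha.
      by field.
    apply: divr_ge0; last exact: ltW.
    lra.
  have y00 : y i = 0 by apply/eqP; rewrite eq_le y0 andbT leNgt.
  by rewrite /p' (negbTE yi) y00; rewrite mul0r mulr0 subr0 addr0.
split.
  move=> i Ci; rewrite /p' (ysupp i Ci) ltxx.
  by rewrite mul0r mulr0 subr0 addr0.
split.
  rewrite sumrB big_split /= -mulr_suml -mulr_sumr ysum -/S.
  by field.
have -> : \sum_i (y i + p' i / alpha - S / alpha * y i) *: A i =
    \sum_i y i *: A i + alpha^-1 *: \sum_i p' i *: A i - (S / alpha) *: \sum_i y i *: A i.
  rewrite !scaler_sumr -big_split -sumrB; apply: eq_bigr => i _.
  rewrite /= !scalerA -scalerDl -scalerBl; congr (_ *: _).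
  by ring.
by rewrite yA -uE' scaler0 add0r subr0 scalerA divff ?scale1r.
Qed.
End Main.

Theorem lemma3p7 (R : realFieldType) (d n : nat) (alpha : R)
  (a : 'I_n -> 'rV[int]_d) (b : 'I_n -> R) (c0 : R) :
  0 < alpha ->
  lattice_polytope (polyh a b) ->
  full_dim (polyh a b) ->
  irredundant a b ->
  (forall i, primitive (a i)) ->
  normal_fan_alpha_canonical alpha a b ->
  is_qcd_inv a b c0 ->
  forall z : 'rV[int]_d,
    relint (scaled_Acore a b c0 alpha) (intv R z) <-> z = 0.
Proof.
move=> apos hlat _ _ _ hfan hq z; split.
  exact: dir1 apos hlat hfan hq.
by move=> ->; exact: dir2 apos hq.
Qed.
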